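(* Let $d\ge2$ be an integer, $p\in(0,1]$, $\lambda\in(0,1)$, $b=1-(1-p)\lambda$, $\bar F$ the solution of $\bar F'(w)=\lambda(p\bar F(w)^d+(1-p)\bar F(w))-\bar F(w)$, $\bar F(0)=\lambda$, and $Q_\lambda=\int_0^\infty\bar F(w)\,dw$. Define $$\tilde Q_\lambda=\frac{\lambda}{b}\left(1+\frac1{d-1}\log\left(\frac{b}{b-p\lambda^d}\right)\right).$$ Then $$\tilde Q_\lambda-\frac{\lambda^{d+1}}{p(d-1)^2b^2}\cdot\frac{\pi^2}{6}\le Q_\lambda\le\tilde Q_\lambda.$$ *)

(* Defs.v *)
From Stdlib Require Import Reals.
From Coquelicot Require Import Coquelicot.
Open Scope R_scope.

Definition Qtilde (d : nat) (p lam : R) : R :=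
  let b := 1 - (1 - p) * lam in
  lam / b * (1 + / (INR d - 1) * ln (b / (b - p * lam ^ d))).

(* Main.v *)
Require Import Defs.
From Stdlib Require Import Reals Lra Lia.
From Coquelicot Require Import Coquelicot.
Open Scope R_scope.


Fixpoint sm (f : nat -> R) (n : nat) : R :=
  match n with O => 0 | S k => sm f k + f k end.

Lemma sm_ext f g n : (forall i, (i < n)%nat -> f i = g i) -> sm f n = sm g n.
Proof. induction n; simpl; intros H; auto. rewrite IHn; [rewrite H|]; auto; intros; apply H; lia. Qed.

Lemma sm_plus f g n : sm (fun i => f i + g i) n = sm f n + sm g n.
Proof. induction n; simpl; [lra|]. rewrite IHn; lra. Qed.

Lemma sm_scal c f n : sm (fun i => c * f i) n = c * sm f n.
Proof. induction n; simpl; [lra|]. rewrite IHn; lra. Qed.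

Lemma sm_le f g n : (forall i, (i < n)%nat -> f i <= g i) -> sm f n <= sm g n.
Proof. induction n; simpl; intros H; [lra|]. apply Rplus_le_compat; [apply IHn; intros; apply H; lia| apply H; lia]. Qed.

Lemma sm_app f m n : sm f (m + n) = sm f m + sm (fun i => f (m + i)%nat) n.
Proof. induction n; simpl. rewrite Nat.add_0_r; lra. rewrite Nat.add_succ_r; simpl. rewrite IHn; lra. Qed.

Lemma sm_S_l f n : sm f (S n) = f O + sm (fun i => f (S i)) n.
Proof. induction n; simpl in *. lra. rewrite IHn. lra. Qed.

Lemma sm_rev f n : sm f n = sm (fun i => f (n - S i)%nat) n.
Proof.
  induction n. reflexivity.
  change (sm f (S n)) with (sm f n + f n). rewrite sm_S_l. rewrite IHn.
  replace (S n - 1)%nat with n by lia. rewrite Rplus_comm. f_equal.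

Qed.

Lemma sm_even_odd f m : sm f (2 * m) = sm (fun i => f (2 * i)%nat) m + sm (fun i => f (2 * i + 1)%nat) m.
Proof.
  induction m. simpl; lra.
  replace (2 * S m)%nat with (S (S (2 * m))) by lia. change (sm f (S (S (2 * m)))) with (sm f (2*m) + f (2*m)%nat + f (S (2*m))). change (sm (fun i => f (2 * i)%nat) (S m)) with (sm (fun i => f (2 * i)%nat) m + f (2*m)%nat).
  change (sm (fun i => f (2 * i + 1)%nat) (S m)) with (sm (fun i => f (2 * i + 1)%nat) m + f (2*m+1)%nat). rewrite IHm.
  replace (S (2*m)) with (2*m+1)%nat by lia. lra.
Qed.

Lemma sm_nonneg_mono f m k : (forall i, 0 <= f i) -> sm f m <= sm f (m + k).
Proof. intros H. rewrite sm_app. assert (0 <= sm (fun i => f (m+i)%nat) k). 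
  { clear -H. induction k; simpl; [lra|]. specialize (H (m+k)%nat). lra. } lra. Qed.

Definition Acsc n := sm (fun k => / (sin (INR (2*k+1) * PI / (4 * 2^n)))^2) (2^n).

Lemma csc_pair y : 0 < y < PI/2 -> / (sin y)^2 + / (sin (PI/2 - y))^2 = 4 * / (sin (2*y))^2.
Proof.
  intros Hy. rewrite sin_shift, sin_2a.
  assert (sin y <> 0). { apply Rgt_not_eq. apply sin_gt_0; lra. }
  assert (cos y <> 0). { apply Rgt_not_eq. apply cos_gt_0; lra. }
  field_simplify; auto.
  replace (sin y ^ 2 + cos y ^ 2) with 1. field; auto. rewrite <- (sin2_cos2 y). unfold Rsqr; ring.
Qed.

Lemma Acsc_rec n : Acsc (S n) = 4 * Acsc n.
Proof.
  unfold Acsc. set (N := (2^n)%nat).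
  assert (HN : INR N = 2^n) by (unfold N; rewrite pow_INR; simpl; f_equal).
  assert (HN1 : (2 ^ S n = N + N)%nat) by (unfold N; simpl; lia).
  rewrite HN1, sm_app. rewrite (sm_rev (fun i => / (sin (INR (2 * (N + i) + 1) * PI / (4 * 2 ^ S n))) ^ 2)).
  rewrite <- sm_plus. rewrite <- sm_scal. apply sm_ext. intros i Hi.
  assert (Hp : 0 < 2^n) by (apply pow_lt; lra).
  assert (HiR : INR (2*i+1) < 2 * INR N).
  { replace 2 with (INR 2) by reflexivity. rewrite <- mult_INR. apply lt_INR. lia. }
  assert (H0: 0 < INR (2*i+1)) by (apply lt_0_INR; lia).
  set (y := INR (2 * i + 1) * PI / (4 * 2 ^ S n)).
  assert (Hy : 0 < y < PI/2).
  { unfold y. simpl pow. rewrite <- HN. split. apply Rdiv_lt_0_compat. apply Rmult_lt_0_compat; [lra|apply PI_RGT_0]. rewrite HN; lra.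
    apply Rmult_lt_reg_r with (8 * INR N). rewrite HN; lra. field_simplify. 2: rewrite HN; lra.
    pose proof PI_RGT_0. nra. }
  replace (INR (2 * (N + (N - S i)) + 1) * PI / (4 * 2 ^ S n)) with (PI / 2 - y).
  2:{ unfold y. replace (2 * (N + (N - S i)) + 1)%nat with (4*N - (2*i+1))%nat by lia.
      rewrite minus_INR by lia. rewrite mult_INR. simpl pow. rewrite <- HN. simpl INR. field. rewrite HN. lra. }
  rewrite csc_pair by exact Hy. do 4 f_equal. unfold y. simpl pow. field. lra.
Qed.

Lemma Acsc_val n : Acsc n = 2 * 4 ^ n.
Proof.
  induction n. unfold Acsc. simpl. replace (1 * PI / (4 * 1)) with (PI/4) by field.
  rewrite sin_PI4. replace (1 / sqrt 2 * (1 / sqrt 2 * 1)) with (/ (sqrt 2 * sqrt 2)).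
  rewrite sqrt_sqrt by lra. field. field. apply Rgt_not_eq, sqrt_lt_R0; lra.
  rewrite Acsc_rec, IHn. simpl; ring.
Qed.

Definition Osum M := sm (fun k => / (INR (2*k+1))^2) M.
Definition Esum M := sm (fun k => / (INR (k+1))^2) M.

Lemma Osum_bound n : Osum (2^n) <= PI^2/8.
Proof.
  assert (Hp : 0 < 2^n) by (apply pow_lt; lra).
  assert (HN : INR (2^n) = 2^n) by (rewrite pow_INR; reflexivity).
  pose proof PI_RGT_0 as HPI.
  assert (H : sm (fun k => / (INR (2*k+1) * PI / (4 * 2^n))^2) (2^n) <= Acsc n).
  { unfold Acsc. apply sm_le. intros i Hi.
    assert (H0: 0 < INR (2*i+1)) by (apply lt_0_INR; lia).
    assert (HiR : INR (2*i+1) < 2 * 2^n).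
    { rewrite <- HN. replace 2 with (INR 2) by reflexivity. rewrite <- mult_INR. apply lt_INR. lia. }
    set (x := INR (2 * i + 1) * PI / (4 * 2 ^ n)).
    assert (Hx : 0 < x < PI/2).
    { unfold x. split. apply Rdiv_lt_0_compat; nra.
      apply Rmult_lt_reg_r with (4 * 2^n). lra. field_simplify; nra. }
    assert (Hs : 0 < sin x) by (apply sin_gt_0; lra).
    pose proof (sin_lt_x x ltac:(lra)).
    apply Rlt_le, Rinv_lt_contravar. apply Rmult_lt_0_compat; apply pow_lt; lra. simpl; nra. }
  rewrite Acsc_val in H.
  replace (sm (fun k => / (INR (2*k+1) * PI / (4 * 2^n))^2) (2^n)) with ((4 * 2^n)^2 / PI^2 * Osum (2^n)) in H.
  2:{ unfold Osum. rewrite <- sm_scal. apply sm_ext. intros i _.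
      assert (0 < INR (2*i+1)) by (apply lt_0_INR; lia). field. lra. }
  replace (4^n) with ((2^n)^2) in H by (rewrite <- pow_mult, Nat.mul_comm, pow_mult; simpl; f_equal; ring).
  assert (0 < (4 * 2^n)^2 / PI^2) by (apply Rdiv_lt_0_compat; apply pow_lt; lra).
  apply Rmult_le_reg_l with ((4 * 2^n)^2 / PI^2); auto.
  eapply Rle_trans; [exact H|]. right. field. lra.
Qed.

Lemma Esum_double M : Esum (2 * M) = Osum M + Esum M / 4.
Proof.
  unfold Esum, Osum. rewrite sm_even_odd. f_equal.
  unfold Rdiv. rewrite (Rmult_comm (sm _ M)), <- sm_scal. apply sm_ext; intros i _.
    replace (2*i+1+1)%nat with (2*(i+1))%nat by lia. rewrite mult_INR.
    assert (0 < INR (i+1)) by (apply lt_0_INR; lia). simpl INR. field. lra.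
Qed.

Lemma Esum_mono m k : Esum m <= Esum (m + k).
Proof. apply sm_nonneg_mono. intros i. apply Rlt_le, Rinv_0_lt_compat, pow_lt, lt_0_INR; lia. Qed.

Lemma basel_bound N : Esum N <= PI^2/6.
Proof.
  assert (H1 : forall n, Esum (2^S n) <= PI^2/6).
  { intros n. replace (2^S n)%nat with (2 * 2^n)%nat by reflexivity.
    pose proof (Esum_double (2^n)). pose proof (Osum_bound n).
    pose proof (Esum_mono (2^n) (2^n)). replace (2^n + 2^n)%nat with (2*2^n)%nat in H1 by lia. lra. }
  assert (HN : (N <= 2^S N)%nat).
  { pose proof (Nat.pow_gt_lin_r 2 (S N)). lia. }
  pose proof (H1 N) as H2. replace (2^S N)%nat with (N + (2^S N - N))%nat in H2 by lia.
  pose proof (Esum_mono N (2^S N - N)). lra.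
Qed.


Lemma mono_der f f' a b : a <= b -> (forall x, a <= x <= b -> is_derive f x (f' x)) ->
  (forall x, a <= x <= b -> 0 <= f' x) -> f a <= f b.
Proof.
  intros Hab Hd Hp. destruct (Rle_lt_or_eq_dec a b Hab) as [Hlt|Heq]; [|subst; lra].
  destruct (MVT_cor2 f f' a b Hlt) as [c [Hc1 Hc2]].
  { intros c Hc. apply is_derive_Reals, Hd; auto. }
  assert (0 <= f' c) by (apply Hp; lra). nra.
Qed.

Lemma const_der f a b : a <= b -> (forall x, a <= x <= b -> is_derive f x 0) -> f a = f b.
Proof.
  intros Hab Hd. destruct (Rle_lt_or_eq_dec a b Hab) as [Hlt|Heq]; [|subst; lra].
  destruct (MVT_cor2 f (fun _ => 0) a b Hlt) as [c [Hc1 Hc2]].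
  { intros c Hc. apply is_derive_Reals, Hd; auto. }
  lra.
Qed.

Lemma is_derive_sm (f : nat -> R -> R) (f' : nat -> R) N x :
  (forall k, (k < N)%nat -> is_derive (f k) x (f' k)) ->
  is_derive (fun y => sm (fun k => f k y) N) x (sm f' N).
Proof.
  induction N; intros H; simpl.
  - apply is_derive_Reals, derivable_pt_lim_const.
  - apply (is_derive_plus (fun y => sm (fun k => f k y) N) (f N)). apply IHN; intros; apply H; lia. apply H; lia.
Qed.

Lemma geom y N : sm (fun k => y ^ k) N * (1 - y) = 1 - y ^ N.
Proof. induction N; simpl. ring. rewrite Rmult_plus_distr_r, IHN. ring. Qed.

Lemma der_pow_div m c y : is_derive (fun y => c * y^(S m) / INR (S m)) y (c * y^m).
Proof.
  assert (INR (S m) <> 0) by (apply not_0_INR; lia).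
  apply (is_derive_ext (fun y => (c / INR (S m)) * y^(S m))).
  intros t; change (c / INR (S m) * t ^ S m = c * t ^ S m / INR (S m)); field; auto.
  apply is_derive_Reals. replace (c * y^m) with (c / INR (S m) * (INR (S m) * y^(pred (S m)))) by (simpl; field; auto).
  apply (derivable_pt_lim_scal (fun y => y^(S m))). apply derivable_pt_lim_pow.
Qed.

Definition Psum N x := sm (fun k => 1 * x ^ (S k) / INR (S k)) N.

Lemma Psum_derive N y : is_derive (Psum N) y (sm (fun k => y ^ k) N).
Proof.
  unfold Psum. 
  replace (sm (fun k => y ^ k) N) with (sm (fun k => 1 * y ^ k) N) by (apply sm_ext; intros; ring).
  apply (is_derive_sm (fun k y => 1 * y ^ (S k) / INR (S k))). intros k _. apply der_pow_div.
Qed.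

Lemma Psum_0 N : Psum N 0 = 0.
Proof. unfold Psum. rewrite (sm_ext _ (fun _ => 0)). induction N; simpl; auto. rewrite IHN; ring.
  intros i _. rewrite pow_i by lia. unfold Rdiv; ring. Qed.

Lemma ln_lower N x : 0 <= x < 1 -> Psum N x <= - ln (1 - x).
Proof.
  intros Hx.
  assert (H := mono_der (fun y => - ln (1 - y) - Psum N y) (fun y => / (1 - y) - sm (fun k => y ^ k) N) 0 x ltac:(lra)).
  simpl in H. rewrite Rminus_0_r, ln_1, Psum_0 in H.
  cut (0 <= - ln (1 - x) - Psum N x). lra. replace 0 with (- 0 - 0) by ring. apply H.
  - intros y Hy. apply (is_derive_minus (fun y => - ln (1 - y))). 
    auto_derive. lra. field. lra. apply Psum_derive.
  - intros y Hy. pose proof (geom y N).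
    assert (sm (fun k => y ^ k) N = (1 - y^N) / (1 - y)) by (rewrite <- H0; field; lra).
    rewrite H1. replace (/ (1 - y) - (1 - y ^ N) / (1 - y)) with (y ^ N / (1 - y)) by (field; lra).
    apply Rmult_le_pos. apply pow_le; lra. apply Rlt_le, Rinv_0_lt_compat; lra.
Qed.

Lemma ln_upper N x : 0 <= x < 1 -> - ln (1 - x) <= Psum N x + x ^ (N+1) / (INR (N+1) * (1 - x)).
Proof.
  intros Hx.
  assert (HN : 0 < INR (N+1)) by (apply lt_0_INR; lia).
  assert (H := mono_der (fun y => Psum N y + y ^ (N+1) / (INR (N+1) * (1 - x)) + ln (1 - y))
     (fun y => sm (fun k => y ^ k) N + y ^ N / (1 - x) - / (1 - y)) 0 x ltac:(lra)).
  simpl in H. rewrite Rminus_0_r, ln_1, Psum_0, pow_i in H by lia.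
  cut (0 <= Psum N x + x ^ (N + 1) / (INR (N + 1) * (1 - x)) + ln (1 - x)). lra.
  replace 0 with (0 + 0 / (INR (N + 1) * (1 - x)) + 0) by (field; lra). apply H.
  - intros y Hy. replace (sm (fun k => y ^ k) N + y ^ N / (1 - x) - / (1 - y)) with ((sm (fun k => y ^ k) N + y ^ N / (1 - x)) + (- / (1 - y))) by ring.
    apply (is_derive_plus (fun y => Psum N y + y ^ (N + 1) / (INR (N + 1) * (1 - x))) (fun y => ln (1 - y))).
    apply (is_derive_plus (Psum N) (fun y => y ^ (N + 1) / (INR (N + 1) * (1 - x)))). apply Psum_derive.
    apply (is_derive_ext (fun y => / (1 - x) * y ^ S N / INR (S N))).
    intros t; change (/ (1 - x) * t ^ S N / INR (S N) = t ^ (N+1) / (INR (N+1) * (1 - x))).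
    rewrite Nat.add_1_r; field; split; [lra|apply not_0_INR; lia].
    replace (y ^ N / (1 - x)) with (/ (1 - x) * y ^ N) by (field; lra). apply der_pow_div.
    auto_derive. lra. field. lra.
  - intros y Hy. pose proof (geom y N).
    assert (sm (fun k => y ^ k) N = (1 - y^N) / (1 - y)) by (rewrite <- H0; field; lra).
    rewrite H1. replace ((1 - y ^ N) / (1 - y) + y ^ N / (1 - x) - / (1 - y)) with (y ^ N * (/(1 - x) - / (1 - y))) by (field; lra).
    apply Rmult_le_pos. apply pow_le; lra. 
    destruct (Req_dec y x). subst; lra. apply Rlt_le, Rlt_Rminus, Rinv_lt_contravar; nra.
Qed.


Lemma der_mult (f g : R -> R) x df dg : is_derive f x df -> is_derive g x dg ->
  is_derive (fun t => f t * g t) x (df * g x + f x * dg).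
Proof. intros H1 H2. apply is_derive_Reals. apply (derivable_pt_lim_mult f g); apply is_derive_Reals; auto. Qed.

Lemma der_exp_comp (g : R -> R) x dg : is_derive g x dg -> is_derive (fun t => exp (g t)) x (dg * exp (g x)).
Proof. intros H. apply is_derive_Reals. rewrite Rmult_comm. apply (derivable_pt_lim_comp g exp). apply is_derive_Reals; auto. apply derivable_pt_lim_exp. Qed.

Lemma is_derive_eq (f : R -> R) x (l l' : R) : is_derive f x l -> l = l' -> is_derive f x l'.
Proof. intros H ->; auto. Qed.

Definition mx0 (w : R) := (w + Rabs w) / 2.

Lemma mx0_pos w : 0 <= w -> mx0 w = w.
Proof. intros. unfold mx0. rewrite Rabs_right by lra. lra. Qed.
Lemma mx0_ge w : 0 <= mx0 w.
Proof. unfold mx0. pose proof (Rle_abs (-w)). rewrite Rabs_Ropp in H. lra. Qed.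

Lemma cont_mx0 w : continuous mx0 w.
Proof.
  apply continuity_pt_filterlim. unfold mx0.
  apply continuity_pt_mult. apply continuity_pt_plus. apply continuity_pt_id. apply Rcontinuity_abs.
  apply continuity_pt_const. intros a b; auto.
Qed.

Lemma cont_of_der (F : R -> R) w : (forall x, 0 <= x -> ex_derive F x) -> continuous (fun t => F (mx0 t)) w.
Proof.
  intros H. exact (continuous_comp mx0 F w (cont_mx0 w) (ex_derive_continuous F (mx0 w) (H _ (mx0_ge w)))).
Qed.

Lemma pos_lin_ode (F s : R -> R) : (forall w, continuous s w) -> 0 < F 0 ->
  (forall w, 0 <= w -> is_derive F w (s w * F w)) -> forall w, 0 <= w -> 0 < F w.
Proof.
  intros Hs H0 HF w Hw.
  set (S := fun v => RInt s 0 v).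
  assert (HS : forall v, is_derive S v (s v)).
  { intros v. apply is_derive_RInt with 0. apply filter_forall. intros x. apply RInt_correct.
    apply ex_RInt_continuous. intros; apply Hs. apply Hs. }
  assert (E := const_der (fun v => F v * exp (- S v)) 0 w Hw).
  simpl in E. unfold S in E. rewrite RInt_point in E. 
  assert (F 0 * exp (- zero) = F w * exp (- RInt s 0 w)).
  { apply E. intros x Hx. eapply is_derive_eq. apply der_mult. apply HF; lra.
    apply der_exp_comp. apply (is_derive_opp (fun v => RInt s 0 v)). apply HS. simpl. unfold opp; simpl. ring. }
  assert (0 < F 0 * exp (- zero)) by (apply Rmult_lt_0_compat; auto; apply exp_pos).
  rewrite H in H1. pose proof (exp_pos (- RInt s 0 w)).
  destruct (Rlt_le_dec 0 (F w)); auto. nra.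
Qed.


Lemma der_inv_pow (F : R -> R) n x dF : is_derive F x dF -> F x <> 0 ->
  is_derive (fun v => / F v ^ S n) x (- (INR (S n) * dF * F x ^ n) / (F x ^ S n) ^ 2).
Proof.
  intros H H0. apply (is_derive_inv (fun v => F v ^ S n)). apply is_derive_pow, H. apply pow_nonzero; auto.
Qed.

Lemma der_sub_const (f : R -> R) x df c : is_derive f x df -> is_derive (fun v => f v - c) x df.
Proof. intros H. apply is_derive_Reals. replace df with (df - 0) by ring. apply (derivable_pt_lim_minus f (fun _ => c)). apply is_derive_Reals; auto. apply derivable_pt_lim_const. Qed.

Lemma der_lin k x : is_derive (fun v => k * v) x k.
Proof. auto_derive; auto; ring. Qed.

Lemma der_neg_lin k x : is_derive (fun v => - (k * v)) x (- k).
Proof. auto_derive; auto; ring. Qed.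

Lemma ode_sol m p lam F : 0 < p <= 1 -> 0 < lam < 1 -> F 0 = lam ->
  (forall w, 0 <= w -> is_derive F w (lam * (p * F w ^ S (S m) + (1 - p) * F w) - F w)) ->
  forall w, 0 <= w -> 0 < F w /\
   F w ^ (S m) * (p * lam / (1 - (1 - p) * lam) + (/ lam ^ S m - p * lam / (1 - (1 - p) * lam)) * exp (INR (S m) * (1 - (1 - p) * lam) * w)) = 1.
Proof.
  intros Hp Hl H0 HF.
  set (b := 1 - (1 - p) * lam). assert (Hb : 0 < b) by (unfold b; nra).
  assert (Hpos : forall w, 0 <= w -> 0 < F w).
  { apply (pos_lin_ode F (fun w => lam * p * F (mx0 w) ^ S m - b)).
    - intros w. 
      assert (Hd : forall x, 0 <= x -> ex_derive F x).
      { intros x Hx. exists (lam * (p * F x ^ S (S m) + (1 - p) * F x) - F x). auto. }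
      assert (Hex : ex_derive (fun y => lam * p * y ^ S m - b) (F (mx0 w))) by (auto_derive; auto).
      exact (continuous_comp (fun t => F (mx0 t)) (fun y => lam * p * y ^ S m - b) w (cont_of_der F w Hd) (ex_derive_continuous _ _ Hex)).
    - rewrite H0; lra.
    - intros w Hw. eapply is_derive_eq. apply HF; auto. rewrite mx0_pos by auto. unfold b. simpl. ring. }
  intros w Hw. split. apply Hpos; auto.
  set (A := p * lam / b). set (k := INR (S m) * b).
  assert (E := const_der (fun v => (/ F v ^ S m - A) * exp (- (k * v))) 0 w Hw).
  simpl in E. rewrite H0, Rmult_0_r, Ropp_0, exp_0, Rmult_1_r in E.
  assert (E' : / (lam * lam ^ m) - A = (/ (F w * F w ^ m) - A) * exp (- (k * w))).
  { apply E. intros x Hx. assert (HFx := Hpos x ltac:(lra)).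
    eapply is_derive_eq. apply der_mult. apply der_sub_const, der_inv_pow. apply HF; lra. lra.
    apply der_exp_comp. apply der_neg_lin.
    unfold opp; simpl pow. unfold A, k, b. rewrite S_INR. field. 
    assert (F x ^ m <> 0) by (apply pow_nonzero; lra). unfold b in Hb. repeat split; auto; lra. }
  assert (HFw := Hpos w Hw).
  assert (Hexp : exp (- (k * w)) * exp (k * w) = 1) by (rewrite <- exp_plus; replace (- (k*w) + k*w) with 0 by ring; apply exp_0).
  pose proof (exp_pos (k * w)). pose proof (exp_pos (- (k * w))).
  assert (Hinv : / (F w * F w ^ m) = A + (/ (lam * lam ^ m) - A) * exp (k * w)).
  { rewrite E', Rmult_assoc, Hexp. ring. }
  change (F w ^ S m) with (F w * F w ^ m). change (lam ^ S m) with (lam * lam ^ m).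
  fold b. fold A. fold k. rewrite <- Hinv. assert (F w ^ m <> 0) by (apply pow_nonzero; lra). field. split; auto; lra.
Qed.


Definition bb p lam := 1 - (1 - p) * lam.
Definition cl lam u := (lam + mx0 u - Rabs (lam - mx0 u)) / 2.
Definition gfun m p lam u := / (bb p lam - p * lam * (cl lam u) ^ S m).
Definition KK m p lam u := RInt (gfun m p lam) 0 u.

Lemma cl_id lam u : 0 <= u <= lam -> cl lam u = u.
Proof. intros. unfold cl. rewrite mx0_pos by lra. rewrite Rabs_right by lra. lra. Qed.

Lemma cl_range lam u : 0 < lam -> 0 <= cl lam u <= lam.
Proof. intros. unfold cl. pose proof (mx0_ge u). destruct (Rle_dec (mx0 u) lam).
  rewrite Rabs_right by lra. lra. rewrite Rabs_left by lra. lra. Qed.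

Lemma cont_cl lam u : continuous (cl lam) u.
Proof.
  apply continuity_pt_filterlim. unfold cl.
  assert (Hm : continuity_pt mx0 u) by (apply continuity_pt_filterlim, cont_mx0).
  apply continuity_pt_mult. apply continuity_pt_minus. apply continuity_pt_plus. apply continuity_pt_const; intros a b; auto. auto.
  apply (continuity_pt_comp (fun v => lam - mx0 v) Rabs). apply continuity_pt_minus. apply continuity_pt_const; intros a b; auto. auto.
  apply Rcontinuity_abs. apply continuity_pt_const; intros a b; auto.
Qed.

Lemma den_pos m p lam y : 0 < p <= 1 -> 0 < lam < 1 -> 0 <= y <= lam ->
  bb p lam - p * lam * lam ^ S m <= bb p lam - p * lam * y ^ S m /\ 0 < bb p lam - p * lam * lam ^ S m.
Proof.
  intros Hp Hl Hy. split.
  - assert (y ^ S m <= lam ^ S m) by (apply pow_incr; lra). assert (0 <= p * lam) by nra. apply Rplus_le_compat_l, Ropp_le_contravar, Rmult_le_compat_l; auto.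
  - assert (lam ^ S m <= 1). { rewrite <- (pow1 (S m)). apply pow_incr; lra. } assert (p * lam * lam ^ S m <= p * lam * 1) by (apply Rmult_le_compat_l; nra). unfold bb. lra.
Qed.

Lemma cont_gt m p lam u : 0 < p <= 1 -> 0 < lam < 1 -> continuous (gfun m p lam) u.
Proof.
  intros Hp Hl.
  destruct (den_pos m p lam (cl lam u) Hp Hl (cl_range lam u ltac:(lra))) as [H1 H2].
  assert (Hex : ex_derive (fun y => / (bb p lam - p * lam * y ^ S m)) (cl lam u)).
  { auto_derive. change (cl lam u ^ S m) with (cl lam u * cl lam u ^ m) in H1. lra. }
  exact (continuous_comp (cl lam) (fun y => / (bb p lam - p * lam * y ^ S m)) u (cont_cl lam u) (ex_derive_continuous _ _ Hex)).
Qed.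

Lemma KK_der m p lam u : 0 < p <= 1 -> 0 < lam < 1 -> is_derive (KK m p lam) u (gfun m p lam u).
Proof.
  intros Hp Hl. apply is_derive_RInt with 0. apply filter_forall. intros x. apply RInt_correct.
  apply ex_RInt_continuous. intros; apply cont_gt; auto. apply cont_gt; auto.
Qed.

Lemma KK_0 m p lam : KK m p lam 0 = 0.
Proof. unfold KK. rewrite RInt_point. reflexivity. Qed.

Definition Sf m p lam N u := sm (fun k => (/ bb p lam * (p * lam / bb p lam) ^ k) * u ^ S (k * S m) / INR (S (k * S m))) (S N).

Lemma Sf_der m p lam N u : 0 < p <= 1 -> 0 < lam < 1 -> 
  is_derive (Sf m p lam N) u (/ bb p lam * sm (fun k => (p * lam / bb p lam * u ^ S m) ^ k) (S N)).
Proof.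
  intros Hp Hl. rewrite <- sm_scal. unfold Sf.
  apply (is_derive_sm (fun k u => (/ bb p lam * (p * lam / bb p lam) ^ k) * u ^ S (k * S m) / INR (S (k * S m)))
    (fun k => / bb p lam * (p * lam / bb p lam * u ^ S m) ^ k)).
  intros k _. eapply is_derive_eq. apply der_pow_div.
  rewrite Rpow_mult_distr, Rmult_assoc. f_equal. f_equal. rewrite <- pow_mult, Nat.mul_comm. reflexivity.
Qed.

Lemma Sf_0 m p lam N : Sf m p lam N 0 = 0.
Proof. unfold Sf. rewrite (sm_ext _ (fun _ => 0)). clear. induction (S N); simpl; auto. rewrite IHn; ring.
  intros i _. rewrite pow_i by lia. unfold Rdiv; ring. Qed.

Lemma Sf_lam m p lam N : 0 < p <= 1 -> 0 < lam < 1 ->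
  Sf m p lam N lam = lam / bb p lam * sm (fun k => (p * lam * lam ^ S m / bb p lam) ^ k / INR (S (k * S m))) (S N).
Proof.
  intros Hp Hl. unfold Sf. rewrite <- sm_scal. apply sm_ext. intros k _.
  assert (0 < bb p lam) by (unfold bb; nra).
  assert (INR (S (k * S m)) <> 0) by (apply not_0_INR; lia).
  replace (lam ^ S (k * S m)) with (lam * (lam ^ S m) ^ k) by (rewrite <- pow_mult, Nat.mul_comm; reflexivity).
  unfold Rdiv. rewrite !Rpow_mult_distr, pow_inv. field. repeat split; auto; try apply pow_nonzero; lra.
Qed.

Lemma der_plus (f g : R -> R) x df dg : is_derive f x df -> is_derive g x dg -> is_derive (fun t => f t + g t) x (df + dg).
Proof. intros H1 H2. apply is_derive_Reals. apply (derivable_pt_lim_plus f g); apply is_derive_Reals; auto. Qed.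
Lemma der_minus (f g : R -> R) x df dg : is_derive f x df -> is_derive g x dg -> is_derive (fun t => f t - g t) x (df - dg).
Proof. intros H1 H2. apply is_derive_Reals. apply (derivable_pt_lim_minus f g); apply is_derive_Reals; auto. Qed.

Lemma KK_bounds m p lam N : 0 < p <= 1 -> 0 < lam < 1 ->
  Sf m p lam N lam <= KK m p lam lam /\
  KK m p lam lam <= Sf m p lam N lam + lam * (p * lam * lam ^ S m / bb p lam) ^ (S N) / (bb p lam * (1 - p * lam * lam ^ S m / bb p lam)).
Proof.
  intros Hp Hl.
  destruct (den_pos m p lam lam Hp Hl ltac:(lra)) as [_ Hd].
  set (b := bb p lam) in *. assert (Hb : 0 < b) by (unfold b, bb; nra).
  set (r := p * lam * lam ^ S m / b).
  assert (Hr1 : r < 1). { unfold r. apply Rmult_lt_reg_r with b; auto. field_simplify; lra. }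
  assert (Hr0 : 0 < r). { unfold r. apply Rdiv_lt_0_compat; auto. apply Rmult_lt_0_compat. nra. apply pow_lt; lra. }
  assert (Hx : forall u, 0 <= u <= lam -> 0 <= p * lam / b * u ^ S m <= r).
  { intros u Hu. assert (0 <= u ^ S m <= lam ^ S m) by (split; [apply pow_le; lra| apply pow_incr; lra]).
    assert (0 <= p * lam / b) by (apply Rmult_le_pos; [nra| apply Rlt_le, Rinv_0_lt_compat; auto]).
    unfold r. split. apply Rmult_le_pos; lra. replace (p * lam * lam ^ S m / b) with (p * lam / b * lam ^ S m) by (field; repeat split; lra).
    apply Rmult_le_compat_l; lra. }
  assert (Hg : forall u, 0 <= u <= lam -> gfun m p lam u = / (b * (1 - p * lam / b * u ^ S m))).
  { intros u Hu. unfold gfun. rewrite cl_id by auto. fold b. f_equal. field. lra. }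
  assert (Hgeo : forall x, x < 1 -> sm (fun k => x ^ k) (S N) = (1 - x ^ S N) / (1 - x)).
  { intros x Hx1. rewrite <- (geom x (S N)). field. lra. }
  split.
  - pose proof (mono_der (fun u => KK m p lam u - Sf m p lam N u)
      (fun u => gfun m p lam u - / b * sm (fun k => (p * lam / b * u ^ S m) ^ k) (S N)) 0 lam ltac:(lra)) as H.
    cbv beta in H. rewrite KK_0, Sf_0 in H.
    cut (0 - 0 <= KK m p lam lam - Sf m p lam N lam). lra. apply H.
    + intros x Hx0. apply der_minus. apply KK_der; auto. apply Sf_der; auto.
    + intros u Hu. destruct (Hx u Hu) as [Hx0 Hx1]. cbv beta. rewrite Hg, Hgeo by (auto; lra).
      replace (/ (b * (1 - p * lam / b * u ^ S m)) - / b * ((1 - (p * lam / b * u ^ S m) ^ S N) / (1 - p * lam / b * u ^ S m)))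
        with ((p * lam / b * u ^ S m) ^ S N / (b * (1 - p * lam / b * u ^ S m))) . 2:{ field. pose proof (den_pos m p lam u Hp Hl Hu). fold b in H0. split; lra. }
      apply Rdiv_le_0_compat. apply pow_le; lra. apply Rmult_lt_0_compat; lra.
  - set (cN := / b * / (1 - r) * (p * lam / b) ^ S N).
    pose proof (mono_der (fun u => Sf m p lam N u + cN * u ^ S (S N * S m) / INR (S (S N * S m)) - KK m p lam u)
      (fun u => / b * sm (fun k => (p * lam / b * u ^ S m) ^ k) (S N) + cN * u ^ (S N * S m) - gfun m p lam u) 0 lam ltac:(lra)) as H.
    cbv beta in H. rewrite KK_0, Sf_0, pow_i in H by lia.
    assert (Hi : 1 <= INR (S (S N * S m))) by (apply (le_INR 1); lia).
    assert (Hc : 0 <= cN * lam ^ S (S N * S m)).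
    { unfold cN. apply Rmult_le_pos. apply Rmult_le_pos. apply Rmult_le_pos; apply Rlt_le, Rinv_0_lt_compat; lra.
      apply pow_le. apply Rmult_le_pos. nra. apply Rlt_le, Rinv_0_lt_compat; lra. apply pow_le; lra. }
    assert (Heq : cN * lam ^ S (S N * S m) = lam * r ^ S N / (b * (1 - r))).
    { assert (Hr' : (p * lam / b) ^ S N * (lam ^ S m) ^ S N = r ^ S N) by (rewrite <- Rpow_mult_distr; unfold r; f_equal; field; lra).
      unfold cN. replace (lam ^ S (S N * S m)) with (lam * (lam ^ S m) ^ S N) by (rewrite <- pow_mult, Nat.mul_comm; reflexivity).
      rewrite <- Hr'. field. split; lra. }
    assert (cN * lam ^ S (S N * S m) / INR (S (S N * S m)) <= lam * r ^ S N / (b * (1 - r))).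
    { rewrite <- Heq. unfold Rdiv. rewrite <- (Rmult_1_r (cN * lam ^ S (S N * S m))) at 2.
      apply Rmult_le_compat_l; auto. rewrite <- Rinv_1. apply Rinv_le_contravar; lra. }
    cut (0 + cN * 0 / INR (S (S N * S m)) - 0 <= Sf m p lam N lam + cN * lam ^ S (S N * S m) / INR (S (S N * S m)) - KK m p lam lam).
    { replace (0 + cN * 0 / INR (S (S N * S m)) - 0) with 0 by (field; repeat split; lra). lra. }
    apply H.
    + intros x Hx0. apply der_minus. apply der_plus. apply Sf_der; auto.
      apply der_pow_div. apply KK_der; auto.
    + intros u Hu. destruct (Hx u Hu) as [Hx0 Hx1]. cbv beta. rewrite Hg, Hgeo by (auto; lra).
      replace (cN * u ^ (S N * S m)) with (/ b * / (1 - r) * (p * lam / b * u ^ S m) ^ S N).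
      2:{ unfold cN. rewrite Rpow_mult_distr. rewrite <- pow_mult, Nat.mul_comm. ring. }
      replace (/ b * ((1 - (p * lam / b * u ^ S m) ^ S N) / (1 - p * lam / b * u ^ S m)) +
        / b * / (1 - r) * (p * lam / b * u ^ S m) ^ S N - / (b * (1 - p * lam / b * u ^ S m)))
        with (/ b * (p * lam / b * u ^ S m) ^ S N * (/ (1 - r) - / (1 - p * lam / b * u ^ S m))) . 2:{ field. pose proof (den_pos m p lam u Hp Hl Hu). fold b in H0. repeat split; try lra. }
      apply Rmult_le_pos. apply Rmult_le_pos. apply Rlt_le, Rinv_0_lt_compat; lra. apply pow_le; lra.
      destruct (Req_dec (p * lam / b * u ^ S m) r) as [E|E]. rewrite E; lra.
      apply Rlt_le, Rlt_Rminus, Rinv_lt_contravar; nra.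
Qed.


Lemma eps_arg X Y C r : 0 < r < 1 -> 0 <= C -> (forall N, X <= Y + C * r ^ (S N)) -> X <= Y.
Proof.
  intros Hr HC H. destruct (Rle_dec X Y) as [|Hn]; auto. exfalso.
  assert (Hd : 0 < (X - Y) / (C + 1)) by (apply Rdiv_lt_0_compat; lra).
  destruct (pow_lt_1_zero r ltac:(rewrite Rabs_right; lra) _ Hd) as [N0 HN].
  specialize (HN (S N0) ltac:(lia)). rewrite Rabs_right in HN by (apply Rle_ge, pow_le; lra).
  specialize (H N0).
  assert (C * r ^ S N0 <= C * ((X - Y) / (C + 1))) by (apply Rmult_le_compat_l; lra).
  assert (C * ((X - Y) / (C + 1)) < X - Y).
  { apply Rmult_lt_reg_r with (C + 1). lra. field_simplify; lra. }
  lra.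
Qed.

Lemma sm_head r m N : sm (fun k => r ^ k / INR (S (k * S m))) (S N) = 1 + sm (fun k => r ^ S k / INR (S (S k * S m))) N.
Proof. rewrite sm_S_l. f_equal. simpl. field. Qed.

Lemma series_bounds m r lam b Q : 0 < r < 1 -> 0 < lam -> 0 < b ->
  (forall N, lam / b * sm (fun k => r ^ k / INR (S (k * S m))) (S N) <= Q /\
             Q <= lam / b * sm (fun k => r ^ k / INR (S (k * S m))) (S N) + lam * r ^ (S N) / (b * (1 - r))) ->
  Q <= lam / b * (1 + / INR (S m) * - ln (1 - r)) /\
  lam / b * (1 + / INR (S m) * - ln (1 - r)) - lam / b * r / INR (S m) ^ 2 * (PI ^ 2 / 6) <= Q.
Proof.
  intros Hr Hl Hb H.
  set (nn := INR (S m)). assert (Hnn : 1 <= nn) by (unfold nn; apply (le_INR 1); lia).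
  assert (HC : 0 <= lam / (b * (1 - r))) by (apply Rlt_le, Rdiv_lt_0_compat; nra).
  assert (Hterm : forall k, INR (S (S k * S m)) = INR (S k) * nn + 1).
  { intros k. rewrite S_INR, mult_INR. reflexivity. }
  assert (Hj : forall k, 1 <= INR (S k)) by (intros; apply (le_INR 1); lia).
  assert (Hrk : forall k, 0 < r ^ S k <= r).
  { intros k. split. apply pow_lt; lra. change (r ^ S k) with (r * r ^ k).
    assert (0 <= r ^ k <= 1) by (split; [apply pow_le; lra| rewrite <- (pow1 k); apply pow_incr; lra]). nra. }
  assert (Hlam : 0 < lam / b) by (apply Rdiv_lt_0_compat; lra).
  split.
  - apply (eps_arg _ _ (lam / (b * (1 - r))) r); auto. intros N. destruct (H N) as [_ H2].
    rewrite sm_head in H2.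
    assert (sm (fun k => r ^ S k / INR (S (S k * S m))) N <= / nn * Psum N r).
    { unfold Psum. rewrite <- sm_scal. apply sm_le. intros k _. rewrite Hterm.
      specialize (Hj k). specialize (Hrk k).
      replace (/ nn * (1 * r ^ S k / INR (S k))) with (r ^ S k / (INR (S k) * nn)) by (field; lra).
      apply Rmult_le_compat_l. lra. apply Rinv_le_contravar; nra. }
    pose proof (ln_lower N r ltac:(lra)).
    assert (/ nn * Psum N r <= / nn * - ln (1 - r)) by (apply Rmult_le_compat_l; [apply Rlt_le, Rinv_0_lt_compat; lra | lra]).
    replace (lam * r ^ S N / (b * (1 - r))) with (lam / (b * (1 - r)) * r ^ S N) in H2 by (field; lra).
    assert (lam / b * (1 + sm (fun k => r ^ S k / INR (S (S k * S m))) N) <= lam / b * (1 + / nn * - ln (1 - r))).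
    { apply Rmult_le_compat_l; lra. }
    lra.
  - apply (Rplus_le_reg_r (lam / b * r / nn ^ 2 * (PI ^ 2 / 6) - Q)). ring_simplify.
    apply (eps_arg _ _ (lam / (b * (1 - r))) r); auto. intros N. destruct (H N) as [H1 _].
    rewrite sm_head in H1.
    pose proof (ln_upper N r ltac:(lra)) as Hu.
    assert (HE : / nn * Psum N r - sm (fun k => r ^ S k / INR (S (S k * S m))) N <= r / nn ^ 2 * Esum N).
    { match goal with |- ?X - ?Y <= _ => replace (X - Y) with (X + -1 * Y) by ring end. unfold Psum, Esum. rewrite <- !sm_scal. rewrite <- sm_plus. apply sm_le. intros k _.
      rewrite Hterm, Nat.add_1_r. specialize (Hj k). specialize (Hrk k). set (j := INR (S k)) in *. set (t := r ^ S k) in *.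
      replace (/ nn * (1 * t / j) + -1 * (t / (j * nn + 1))) with (t / (nn * j * (nn * j + 1))) by (field; nra).
      replace (r / nn ^ 2 * / j ^ 2) with (r / (nn * j * (nn * j))) by (field; nra).
      unfold Rdiv. apply Rmult_le_compat. lra. apply Rlt_le, Rinv_0_lt_compat; nra. lra.
      assert (0 < nn * j) by (apply Rmult_lt_0_compat; lra). apply Rinv_le_contravar; nra. }
    pose proof (basel_bound N) as HB.
    assert (r / nn ^ 2 * Esum N <= r / nn ^ 2 * (PI ^ 2 / 6)).
    { apply Rmult_le_compat_l; auto. apply Rdiv_le_0_compat; [lra| nra]. }
    assert (HN1 : 1 <= INR (N + 1)) by (apply (le_INR 1); lia).
    assert (r ^ (N + 1) / (INR (N + 1) * (1 - r)) <= r ^ S N / (1 - r)).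
    { rewrite Nat.add_1_r in *. unfold Rdiv. apply Rmult_le_compat_l. apply pow_le; lra.
      apply Rinv_le_contravar; nra. }
    assert (Hx : - ln (1 - r) <= Psum N r + r ^ S N / (1 - r)) by lra.
    assert (/ nn * - ln (1 - r) <= / nn * Psum N r + r ^ S N / (1 - r)).
    { assert (0 < / nn <= 1). { split. apply Rinv_0_lt_compat; lra. rewrite <- Rinv_1. apply Rinv_le_contravar; lra. }
      assert (0 <= r ^ S N / (1 - r)) by (apply Rdiv_le_0_compat; [apply pow_le|]; lra).
      assert (/ nn * - ln (1 - r) <= / nn * (Psum N r + r ^ S N / (1 - r))) by (apply Rmult_le_compat_l; lra).
      nra. }
    assert (lam / b * (1 + / nn * - ln (1 - r)) <= lam / b * (1 + sm (fun k => r ^ S k / INR (S (S k * S m))) N + r / nn ^ 2 * (PI ^ 2 / 6) + r ^ S N / (1 - r))).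
    { apply Rmult_le_compat_l; lra. }
    replace (lam / (b * (1 - r)) * r ^ S N) with (lam / b * (r ^ S N / (1 - r))) by (field; lra).
    replace (lam / b * r / nn ^ 2 * (PI ^ 2 / 6)) with (lam / b * (r / nn ^ 2 * (PI ^ 2 / 6))) by (field; lra).
    nra.
Qed.


Lemma pow_lt_S x y m : 0 <= x < y -> x ^ S m < y ^ S m.
Proof.
  intros H. change (x * x ^ m < y * y ^ m).
  assert (x ^ m <= y ^ m) by (apply pow_incr; lra). assert (0 < y ^ m) by (apply pow_lt; lra).
  assert (0 <= x ^ m) by (apply pow_le; lra). nra.
Qed.

Theorem proposition4p8 (d : nat) (p lam : R) (F : R -> R) :
  (2 <= d)%nat ->
  0 < p <= 1 ->
  0 < lam < 1 ->
  F 0 = lam ->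
  (forall w, 0 <= w ->
     is_derive F w (lam * (p * F w ^ d + (1 - p) * F w) - F w)) ->
  exists Q : R,
    is_RInt_gen F (at_point 0) (Rbar_locally p_infty) Q /\
    Qtilde d p lam
      - lam ^ (d + 1) / (p * (INR d - 1) ^ 2 * (1 - (1 - p) * lam) ^ 2) * (PI ^ 2 / 6)
      <= Q /\
    Q <= Qtilde d p lam.
Proof.
  intros Hd Hp Hl H0 HF.
  destruct d as [|[|m]]; [lia|lia|]. clear Hd.
  pose proof (ode_sol m p lam F Hp Hl H0 HF) as Hsol.
  fold (bb p lam) in Hsol. set (b := bb p lam) in *.
  destruct (den_pos m p lam lam Hp Hl ltac:(lra)) as [_ Hden]. fold b in Hden.
  assert (Hb : 0 < b) by (unfold b, bb; nra).
  set (A := p * lam / b) in *. set (B := / lam ^ S m - A) in *. set (k := INR (S m) * b) in *.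
  assert (HA : 0 <= A) by (unfold A; apply Rmult_le_pos; [nra| apply Rlt_le, Rinv_0_lt_compat; lra]).
  assert (Hlm : 0 < lam ^ S m) by (apply pow_lt; lra).
  assert (HB : 0 < B).
  { replace B with ((b - p * lam * lam ^ S m) / (lam ^ S m * b)) by (unfold B, A; field; lra).
    apply Rdiv_lt_0_compat; nra. }
  assert (Hk : 0 < k) by (unfold k; apply Rmult_lt_0_compat; [apply lt_0_INR; lia| lra]).
  assert (HFb : forall w, 0 <= w -> 0 < F w <= lam).
  { intros w Hw. destruct (Hsol w Hw) as [Hpos Heq]. split; auto.
    destruct (Rle_dec (F w) lam) as [|Hn]; auto. exfalso.
    pose proof (pow_lt_S lam (F w) m ltac:(lra)).
    pose proof (exp_ineq1_le (k * w)). assert (0 <= k * w) by nra.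
    assert (HAB : lam ^ S m * (A + B) = 1) by (unfold B; field; lra).
    assert (A + B <= A + B * exp (k * w)) by nra.
    assert (0 < A + B) by lra.
    assert (lam ^ S m * (A + B) < F w ^ S m * (A + B)) by nra.
    assert (F w ^ S m * (A + B) <= F w ^ S m * (A + B * exp (k * w))).
    { apply Rmult_le_compat_l; auto. apply pow_le; lra. }
    lra. }
  assert (Hlim0 : filterlim F (Rbar_locally p_infty) (locally 0)).
  { intros P [eps HP]. pose proof (cond_pos eps) as Heps.
    assert (he : 0 < eps ^ S m) by (apply pow_lt; lra).
    set (c := eps ^ S m * B * k). assert (Hc : 0 < c) by (unfold c; apply Rmult_lt_0_compat; [nra|lra]).
    exists (Rmax 0 (/ c)). intros w Hw. apply HP.
    pose proof (Rmax_l 0 (/ c)). pose proof (Rmax_r 0 (/ c)).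
    assert (Hw0 : 0 <= w) by lra.
    destruct (HFb w Hw0). destruct (Hsol w Hw0) as [_ Heq].
    change (Rabs (F w - 0) < eps).
    rewrite Rminus_0_r, Rabs_right by lra.
    destruct (Rlt_le_dec (F w) eps) as [|Hge]; auto. exfalso.
    assert (eps ^ S m <= F w ^ S m) by (apply pow_incr; lra).
    pose proof (exp_ineq1_le (k * w)).
    assert (c * w > 1).
    { assert (c * w > c * / c) by (apply Rmult_lt_compat_l; lra). rewrite Rinv_r in H6 by lra. lra. }
    assert (0 <= B * exp (k * w)) by (pose proof (exp_pos (k*w)); nra).
    assert (eps ^ S m * (A + B * exp (k * w)) <= F w ^ S m * (A + B * exp (k * w))) by (apply Rmult_le_compat_r; lra).
    assert (eps ^ S m * (B * (1 + k * w)) <= eps ^ S m * (A + B * exp (k * w))) by (apply Rmult_le_compat_l; nra).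
    unfold c in H6. nra. }
  assert (Hchain : forall w, 0 <= w -> is_derive (fun t => - KK m p lam (F t)) w (F w)).
  { intros w Hw. destruct (HFb w Hw).
    eapply is_derive_eq. apply (is_derive_opp (fun t => KK m p lam (F t))). apply (is_derive_comp (KK m p lam) F). apply KK_der; auto. apply HF; auto.
    change (- ((lam * (p * F w ^ S (S m) + (1 - p) * F w) - F w) * gfun m p lam (F w)) = F w).
    unfold gfun. rewrite cl_id by lra. destruct (den_pos m p lam (F w) Hp Hl ltac:(lra)) as [D1 _].
    fold b in D1. unfold b, bb in *. change (F w ^ S (S m)) with (F w * F w ^ S m). field. lra. }
  assert (HI : forall y, 0 <= y -> is_RInt F 0 y (KK m p lam lam - KK m p lam (F y))).
  { intros y Hy. 
    assert (H := is_RInt_derive (fun t => - KK m p lam (F t)) F 0 y).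
    rewrite Rmin_left, Rmax_right in H by lra.
    replace (KK m p lam lam - KK m p lam (F y)) with (minus (- KK m p lam (F y)) (- KK m p lam (F 0))).
    apply H. intros; apply Hchain; lra. intros x Hx. exact (ex_derive_continuous F x (ex_intro _ _ (HF x ltac:(lra)))).
    rewrite H0. unfold minus, plus, opp; simpl. ring. }
  assert (HKc : filterlim (fun z => KK m p lam lam - KK m p lam z) (locally 0) (locally (KK m p lam lam))).
  { assert (Hc := ex_derive_continuous (fun z => KK m p lam lam - KK m p lam z) 0).
    assert (Hc' : continuous (fun z => KK m p lam lam - KK m p lam z) 0).
    { apply Hc. exists (0 - gfun m p lam 0). apply der_minus. apply is_derive_Reals, derivable_pt_lim_const. apply KK_der; auto. }
    unfold continuous in Hc'. cbv beta in Hc'. rewrite KK_0, Rminus_0_r in Hc'. exact Hc'. }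
  pose proof (filterlim_comp _ _ _ F (fun z => KK m p lam lam - KK m p lam z) _ _ _ Hlim0 HKc) as Hlim.
  exists (KK m p lam lam). split.
  { unfold is_RInt_gen, filterlimi, filter_le, filtermapi. intros P HP.
    apply (Filter_prod _ _ _ (fun a => a = 0) (fun y => 0 < y /\ P (KK m p lam lam - KK m p lam (F y)))).
    - reflexivity.
    - apply filter_and. exists 0; auto. apply Hlim; auto.
    - intros a y -> [Hy HPy]. exists (KK m p lam lam - KK m p lam (F y)). split; auto. apply HI; lra. }
  set (r := p * lam * lam ^ S m / b).
  assert (Hr : 0 < r < 1).
  { unfold r. split. apply Rdiv_lt_0_compat; auto. apply Rmult_lt_0_compat; nra.
    apply Rmult_lt_reg_r with b; auto. field_simplify; lra. }
  assert (Hser := series_bounds m r lam b (KK m p lam lam) Hr ltac:(lra) Hb).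
  destruct Hser as [Hup Hlo].
  { intros N. destruct (KK_bounds m p lam N Hp Hl) as [h1 h2]. rewrite Sf_lam in h1, h2 by auto. fold b r in h1, h2. split; auto. }
  assert (HQt : Qtilde (S (S m)) p lam = lam / b * (1 + / INR (S m) * - ln (1 - r))).
  { unfold Qtilde; cbv zeta. change (1 - (1 - p) * lam) with b. rewrite (S_INR (S m)).
    replace (INR (S m) + 1 - 1) with (INR (S m)) by ring.
    replace (b / (b - p * lam ^ S (S m))) with (/ (1 - r)).
    rewrite ln_Rinv by lra. reflexivity.
    unfold r. change (lam ^ S (S m)) with (lam * lam ^ S m). field. split; lra. }
  assert (HT : lam / b * r / INR (S m) ^ 2 * (PI ^ 2 / 6) <=
     lam ^ (S (S m) + 1) / (p * (INR (S (S m)) - 1) ^ 2 * (1 - (1 - p) * lam) ^ 2) * (PI ^ 2 / 6)).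
  { change (1 - (1 - p) * lam) with b. rewrite (S_INR (S m)).
    replace (INR (S m) + 1 - 1) with (INR (S m)) by ring.
    replace (lam ^ (S (S m) + 1)) with (lam * lam * lam ^ S m) by (rewrite Nat.add_1_r; simpl; ring).
    apply Rmult_le_compat_r. pose proof PI_RGT_0. nra.
    assert (Hn : 0 < INR (S m)) by (apply lt_0_INR; lia).
    set (X := lam * lam * lam ^ S m / (INR (S m) ^ 2 * b ^ 2)).
    assert (HX : 0 < X) by (unfold X; apply Rdiv_lt_0_compat; [apply Rmult_lt_0_compat; [nra|auto] | apply Rmult_lt_0_compat; apply pow_lt; lra]).
    replace (lam / b * r / INR (S m) ^ 2) with (p * X) by (unfold X, r; field; lra).
    replace (lam * lam * lam ^ S m / (p * INR (S m) ^ 2 * b ^ 2)) with (X / p) by (unfold X; field; lra).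
    apply Rmult_le_reg_l with p. lra. replace (p * (X / p)) with X by (field; lra). assert (p * p <= 1) by nra. assert (p * (p * X) = (p * p) * X) by ring. nra. }
  rewrite HQt. split; lra.
Qed.
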